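(* On $M=(0,\infty)$ with $g_R=dx^2$, let $I_k=[2^{-(k+1)},2^{-k}]$ for $k=0,1,2,\dots$ and let $f:(0,\infty)\to\mathbb R$ be any smooth function with $|f|<1$ everywhere such that $f\equiv 2^{-(4k+1)}-1$ on $I_{4k}$ and $f\equiv 1-2^{-(4k+3)}$ on $I_{4k+2}$ for all $k\ge0$. Then the Randers metric $R$ with Zermelo data $(dx^2,\,f\partial_x)$ is forward and backward geodesically complete, although $g_R$ is incomplete.
   Context: The Randers metric with Zermelo data $(g_R,W)$, $|W|_R<1$, is the Finsler metric $R(v)=\dfrac{|v|_R^2}{g_R(W,v)+\sqrt{(1-|W|_R^2)|v|_R^2+g_R(W,v)^2}}$, whose unit sphere at $p$ is the translate by $W_p$ of the $g_R$-unit sphere. Forward (resp. backward) completeness means every inextendible geodesic is defined on an interval unbounded above (resp. below). *)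

(* Defs.v *)
From Stdlib Require Import Reals Lra.
Open Scope R_scope.

Definition smooth_on_pos (f : R -> R) : Prop :=
  exists F : nat -> R -> R,
    F 0%nat = f /\
    forall (k : nat) (x : R), 0 < x -> derivable_pt_lim (F k) x (F (S k) x).

(* Randers metric with Zermelo data (g_R, W) in dimension 1, g_R = dx^2,
   W = w(x) d/dx:  R(v) = |v|^2 / (g(W,v) + sqrt((1-|W|^2)|v|^2 + g(W,v)^2)). *)
Definition randers (w : R -> R) (x v : R) : R :=
  (v * v) / (w x * v + sqrt ((1 - w x * w x) * (v * v) + (w x * v) * (w x * v))).

Definition randersL (w : R -> R) (x v : R) : R := (randers w x v) ^ 2 / 2.

Definition riemL (x v : R) : R := v * v / 2.

Definition open_interval (D : R -> Prop) : Prop :=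
  (exists t, D t) /\
  (forall a b c, D a -> D c -> a <= b <= c -> D b) /\
  (forall t, D t -> exists e, 0 < e /\ forall s, Rabs (s - t) < e -> D s).

(* (Nonconstant) geodesic of the Lagrangian L on the interval D, with values in
   M = (0,+oo): a C^1 regular curve satisfying the Euler-Lagrange equation
   d/dt (dL/dv)(g, g') = (dL/dx)(g, g'). *)
Definition geodesic (L : R -> R -> R) (D : R -> Prop) (g : R -> R) : Prop :=
  open_interval D /\
  (forall t, D t -> 0 < g t) /\
  exists dg p q : R -> R,
    forall t, D t ->
      derivable_pt_lim g t (dg t) /\
      dg t <> 0 /\
      derivable_pt_lim (fun v => L (g t) v) (dg t) (p t) /\
      derivable_pt_lim (fun x => L x (dg t)) (g t) (q t) /\
      derivable_pt_lim p t (q t).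

Definition inextendible_geodesic (L : R -> R -> R) (D : R -> Prop) (g : R -> R) : Prop :=
  geodesic L D g /\
  ~ (exists (D' : R -> Prop) (h : R -> R),
        geodesic L D' h /\
        (forall t, D t -> D' t) /\
        (forall t, D t -> h t = g t) /\
        (exists t, D' t /\ ~ D t)).

Definition forward_complete (L : R -> R -> R) : Prop :=
  forall D g, inextendible_geodesic L D g ->
    forall M, exists t, D t /\ M < t.

Definition backward_complete (L : R -> R -> R) : Prop :=
  forall D g, inextendible_geodesic L D g ->
    forall M, exists t, D t /\ t < M.

(* Main.v *)
Require Import Defs.
From Stdlib Require Import Reals Lra Lia Classical ClassicalEpsilon Ranalysis5.
From Coquelicot Require Import Coquelicot.
Open Scope R_scope.

Lemma randers_abs w x v : randers w x v = v * v / (w x * v + Rabs v).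
Proof.
  unfold randers. f_equal. f_equal.
  replace ((1 - w x * w x) * (v * v) + w x * v * (w x * v)) with (Rsqr v)
    by (unfold Rsqr; ring).
  apply sqrt_Rsqr_abs.
Qed.

Lemma sgn_abs s v : (s = 1 \/ s = -1) -> 0 < s * v -> Rabs v = s * v.
Proof.
  intros [-> | ->] H.
  - rewrite Rabs_right; lra.
  - rewrite Rabs_left; lra.
Qed.

Lemma randersL_eq w s y v : (s = 1 \/ s = -1) -> 0 < s * v ->
  randersL w y v = (v / (w y + s)) ^ 2 / 2.
Proof.
  intros Hs Hv. unfold randersL. rewrite randers_abs, (sgn_abs s v Hs Hv).
  f_equal. f_equal.
  assert (v <> 0) by (intro; subst; lra).
  replace (w y * v + s * v) with (v * (w y + s)) by ring.
  unfold Rdiv. rewrite Rinv_mult.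
  replace (v * v * (/ v * / (w y + s))) with ((v * / v) * v * / (w y + s)) by ring.
  rewrite Rinv_r; [ring | auto].
Qed.

Lemma PV w s y v : (s = 1 \/ s = -1) -> 0 < s * v -> w y + s <> 0 ->
  derivable_pt_lim (fun v => randersL w y v) v (v / (w y + s) ^ 2).
Proof.
  intros Hs Hv He. apply is_derive_Reals.
  apply is_derive_ext_loc with (f := fun v => (v / (w y + s)) ^ 2 / 2).
  - assert (Hp : 0 < Rabs v) by (apply Rabs_pos_lt; intro; subst; lra).
    exists (mkposreal _ Hp). intros z Hz.
    change (Rabs (z - v) < Rabs v) in Hz.
    rewrite (randersL_eq w s y z Hs); auto.
    destruct Hs as [-> | ->].
    + rewrite (Rabs_right v) in Hz by lra. apply Rabs_def2 in Hz. lra.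
    + rewrite (Rabs_left v) in Hz by lra. apply Rabs_def2 in Hz. lra.
  - auto_derive. auto. field. auto.
Qed.

Lemma PX (w w' : R -> R) s y v : (s = 1 \/ s = -1) -> 0 < s * v -> w y + s <> 0 ->
  derivable_pt_lim w y (w' y) ->
  derivable_pt_lim (fun x => randersL w x v) y (- (v * v) * w' y / (w y + s) ^ 3).
Proof.
  intros Hs Hv He Hd.
  assert (HG : derivable_pt_lim (fun e => (v / e) ^ 2 / 2) (w y + s) (- (v*v) / (w y + s) ^ 3)).
  { apply is_derive_Reals. auto_derive. auto. field. auto. }
  pose proof (derivable_pt_lim_plus w (fun _ => s) y _ _ Hd (derivable_pt_lim_const s y)) as H1.
  rewrite Rplus_0_r in H1.
  pose proof (derivable_pt_lim_comp _ _ y _ _ H1 HG) as H2.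
  apply is_derive_Reals. apply is_derive_Reals in H2.
  eapply is_derive_ext; [ | replace (- (v * v) * w' y / (w y + s) ^ 3)
     with (- (v * v) / (w y + s) ^ 3 * w' y) by (field; auto); exact H2 ].
  intro t. unfold comp, plus_fct. simpl. rewrite (randersL_eq w s t v Hs Hv). reflexivity.
Qed.

Lemma dcont u t l : derivable_pt_lim u t l -> continuity_pt u t.
Proof. intro H. apply derivable_continuous_pt. exists l. exact H. Qed.

Lemma zero_deriv_const (D : R -> Prop) (u : R -> R) :
  (forall a b c, D a -> D c -> a <= b <= c -> D b) ->
  (forall t, D t -> derivable_pt_lim u t 0) ->
  forall t1 t2, D t1 -> D t2 -> u t1 = u t2.
Proof.
  intros Hc Hu.
  assert (K : forall t1 t2, D t1 -> D t2 -> t1 <= t2 -> u t1 = u t2).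
  { intros t1 t2 H1 H2 Hle.
    destruct (MVT_gen u t1 t2 (fun _ => 0)) as [x [_ Hx]].
    - rewrite Rmin_left, Rmax_right by lra. intros x Hx. apply is_derive_Reals.
      apply Hu. apply (Hc t1 x t2); auto; lra.
    - rewrite Rmin_left, Rmax_right by lra. intros x Hx. apply (dcont u x 0).
      apply Hu. apply (Hc t1 x t2); auto; lra.
    - lra. }
  intros t1 t2 H1 H2. destruct (Rle_dec t1 t2).
  - auto.
  - symmetry. apply K; auto; lra.
Qed.

Lemma no_sign_change p a b : a < b ->
  (forall z, a <= z <= b -> continuity_pt p z /\ p z <> 0) -> 0 < p a * p b.
Proof.
  intros Hab H.
  destruct (H a) as [_ Ha]; [lra|]. destruct (H b) as [_ Hb']; [lra|].
  destruct (Rtotal_order (p a) 0) as [Ha1|[Ha1|Ha1]]; [|contradiction|];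
  destruct (Rtotal_order (p b) 0) as [Hb1|[Hb1|Hb1]]; try contradiction.
  - nra.
  - destruct (IVT_interv p a b) as [z [Hz Hz0]]; auto.
    + intros; apply H; auto.
    + exfalso. apply (H z Hz). auto.
  - destruct (IVT_interv (fun x => - p x) a b) as [z [Hz Hz0]]; auto.
    + intros; apply continuity_pt_opp; apply H; auto.
    + lra.
    + lra.
    + exfalso. apply (H z Hz). lra.
  - nra.
Qed.

Lemma pos_deriv_incr (Phi k : R -> R) :
  (forall x, 0 < x -> derivable_pt_lim Phi x (k x)) ->
  (forall x, 0 < x -> 0 < k x) ->
  forall a b, 0 < a -> a < b -> Phi a < Phi b.
Proof.
  intros Hd Hk a b Ha Hab.
  destruct (MVT_gen Phi a b k) as [x [Hx Hx2]].
  - rewrite Rmin_left, Rmax_right by lra. intros x Hx. apply is_derive_Reals.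
    apply Hd. lra.
  - rewrite Rmin_left, Rmax_right by lra. intros x Hx. apply (dcont Phi x (k x)).
    apply Hd. lra.
  - rewrite Rmin_left, Rmax_right in Hx by lra.
    assert (0 < k x) by (apply Hk; lra). nra.
Qed.

Lemma inverse_fun (Phi k : R -> R) :
  (forall x, 0 < x -> derivable_pt_lim Phi x (k x)) ->
  (forall x, 0 < x -> 0 < k x) ->
  (forall M, exists x, 0 < x /\ M < Phi x) ->
  (forall M, exists x, 0 < x /\ Phi x < M) ->
  exists Psi : R -> R, forall y, 0 < Psi y /\ Phi (Psi y) = y /\
     derivable_pt_lim Psi y (/ k (Psi y)).
Proof.
  intros Hd Hk Hup Hlo.
  assert (Hinc := pos_deriv_incr Phi k Hd Hk).
  assert (Hinj : forall a b, 0 < a -> 0 < b -> Phi a = Phi b -> a = b).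
  { intros a b Ha Hb E. destruct (Rtotal_order a b) as [h|[h|h]]; auto.
    - specialize (Hinc a b Ha h); lra.
    - specialize (Hinc b a Hb h); lra. }
  assert (Hle : forall a b, 0 < a -> 0 < b -> Phi a <= Phi b -> a <= b).
  { intros a b Ha Hb E. destruct (Rle_dec a b); auto.
    specialize (Hinc b a Hb ltac:(lra)); lra. }
  assert (Hex : forall y, exists x, 0 < x /\ Phi x = y).
  { intro y. destruct (Hup y) as [b [Hb Hb2]]. destruct (Hlo (Rmin y (Phi b))) as [a [Ha Ha2]].
    assert (Ha3 : Phi a < y) by (pose proof (Rmin_l y (Phi b)); lra).
    assert (Hab : a < b).
    { destruct (Rle_dec b a); [|lra]. destruct (Req_dec a b) as [->|]; [lra|].
      specialize (Hinc b a Hb ltac:(lra)). pose proof (Rmin_r y (Phi b)). lra. }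
    destruct (IVT_interv (fun x => Phi x - y) a b) as [z [Hz Hz0]].
    - intros x Hx. apply continuity_pt_minus. apply (dcont Phi x (k x)). apply Hd; lra.
      apply continuity_pt_const. intros ? ?; auto.
    - auto.
    - lra.
    - lra.
    - exists z. split; lra. }
  set (Psi := fun y => proj1_sig (constructive_indefinite_description _ (Hex y))).
  assert (HP : forall y, 0 < Psi y /\ Phi (Psi y) = y).
  { intro y. unfold Psi. destruct (constructive_indefinite_description _ (Hex y)) as [x Hx].
    simpl. auto. }
  exists Psi. intro y. destruct (HP y) as [H1 H2]. split; [auto|split;[auto|]].
  set (lb := Psi (y - 1)). set (ub := Psi (y + 1)).
  assert (Hlb : 0 < lb) by (apply HP).
  assert (Hub : 0 < ub) by (apply HP).
  assert (HPl : Phi lb = y - 1) by apply HP.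
  assert (HPu : Phi ub = y + 1) by apply HP.
  assert (Hlu : lb < ub).
  { destruct (Rle_dec ub lb). destruct (Req_dec ub lb). rewrite <- H in HPl. lra.
    specialize (Hinc ub lb Hub ltac:(lra)). lra. lra. }
  assert (Hcont : continuity_pt Psi y).
  { apply (continuity_pt_recip_interv Phi Psi lb ub Hlu).
    - intros a b Ha Hab Hb. apply Hinc; lra.
    - intros x _ _. unfold comp, id. apply HP.
    - intros x Hx1 Hx2. destruct (HP x) as [Q1 Q2]. split; apply Hle; auto; lra.
    - intros a Ha. apply (dcont Phi a (k a)). apply Hd. lra.
    - lra. }
  assert (Prf : forall a, Psi (y - 1) <= a <= Psi (y + 1) -> derivable_pt Phi a).
  { intros a Ha. exists (k a). apply Hd. fold lb in Ha. lra. }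
  assert (Hyy : Psi (y - 1) <= Psi y <= Psi (y + 1)).
  { destruct (HP (y-1)), (HP (y+1)). split; apply Hle; auto; lra. }
  pose proof (derivable_pt_lim_recip_interv Phi Psi (y - 1) (y + 1) y Prf Hcont
     ltac:(lra) ltac:(lra) Hyy) as R.
  assert (Hdp : derive_pt Phi (Psi y) (Prf (Psi y) Hyy) = k (Psi y)).
  { apply derive_pt_eq_0. apply Hd. auto. }
  rewrite Hdp in R. replace (/ k (Psi y)) with (1 / k (Psi y)) by (field; specialize (Hk _ H1); lra).
  apply R.
  - intros x _. unfold comp, id. apply HP.
  - specialize (Hk _ H1); lra.
Qed.

Lemma antideriv (k : R -> R) : (forall x, 0 < x -> continuity_pt k x) ->
  exists Phi : R -> R, forall x, 0 < x -> derivable_pt_lim Phi x (k x).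
Proof.
  intros Hk. exists (fun x => RInt k 1 x). intros x Hx.
  apply is_derive_Reals. apply is_derive_RInt with (a := 1).
  - assert (He : 0 < x / 2) by lra. exists (mkposreal _ He). intros b Hb.
    change (Rabs (b - x) < x / 2) in Hb. apply Rabs_def2 in Hb.
    refine (RInt_correct k 1 b _). apply ex_RInt_continuous. intros z Hz.
    apply continuity_pt_filterlim. apply Hk.
    pose proof (Rmin_glb_lt 1 b 0). destruct Hz. 
    assert (0 < Rmin 1 b) by (apply Rmin_glb_lt; lra). lra.
  - apply continuity_pt_filterlim. apply Hk. auto.
Qed.

Lemma dcont' u t l : derivable_pt_lim u t l -> continuity_pt u t.
Proof. intro H. apply derivable_continuous_pt. exists l. exact H. Qed.

Lemma half_pow_pos n : 0 < (/2) ^ n.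
Proof. apply pow_lt. lra. Qed.

Lemma half_pow_le a b : (a <= b)%nat -> (/2) ^ b <= (/2) ^ a.
Proof.
  induction 1. lra. simpl. pose proof (half_pow_pos m). lra.
Qed.

Section U.
Lemma up_unb (f Phi : R -> R) s c :
  (s = 1 \/ s = -1) -> 0 < c ->
  (forall x, 0 < x -> Rabs (f x) < 1) ->
  (forall x, 0 < x -> derivable_pt_lim Phi x (/ (c * (1 + s * f x)))) ->
  forall M, exists x, 0 < x /\ M < Phi x.
Proof.
  intros Hs Hc Hb Hd M.
  set (x := 1 + 2 * c * (Rabs (M - Phi 1) + 1)).
  assert (Hx : 1 < x) by (unfold x; pose proof (Rabs_pos (M - Phi 1)); nra).
  exists x. split; [lra|].
  destruct (MVT_gen Phi 1 x (fun x => / (c * (1 + s * f x)))) as [z [Hz Hz2]].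
  - rewrite Rmin_left, Rmax_right by lra. intros y Hy. apply is_derive_Reals. apply Hd. lra.
  - rewrite Rmin_left, Rmax_right by lra. intros y Hy. eapply dcont'. apply Hd. lra.
  - rewrite Rmin_left, Rmax_right in Hz by lra.
    assert (Hf := Hb z ltac:(lra)). apply Rabs_def2 in Hf.
    assert (H1 : 0 < 1 + s * f z < 2) by (destruct Hs as [-> | ->]; lra).
    assert (H2 : / (2 * c) <= / (c * (1 + s * f z))).
    { apply Rlt_le. apply Rinv_lt_contravar. apply Rmult_lt_0_compat; nra. nra. }
    assert (H3 : (x - 1) / (2 * c) = Rabs (M - Phi 1) + 1) by (unfold x; field; lra).
    assert (H4 : / (2 * c) * (x - 1) <= / (c * (1 + s * f z)) * (x - 1)) by nra.
    pose proof (Rle_abs (M - Phi 1)). unfold Rdiv in H3. lra.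
Qed.

Lemma lo_unb (f Phi : R -> R) s c (m : nat -> nat) :
  (s = 1 \/ s = -1) -> 0 < c ->
  (forall x, 0 < x -> Rabs (f x) < 1) ->
  (forall x, 0 < x -> derivable_pt_lim Phi x (/ (c * (1 + s * f x)))) ->
  (forall n y, (/2) ^ (S (m n)) <= y <= (/2) ^ (m n) -> 1 + s * f y = (/2) ^ (S (m n))) ->
  (forall n, (S (m n) <= m (S n))%nat) ->
  forall M, exists x, 0 < x /\ Phi x < M.
Proof.
  intros Hs Hc Hb Hd Hint Hm M.
  assert (Hk : forall x, 0 < x -> 0 < / (c * (1 + s * f x))).
  { intros x Hx. apply Rinv_0_lt_compat. assert (Hf := Hb x Hx). apply Rabs_def2 in Hf.
    apply Rmult_lt_0_compat; auto. destruct Hs as [-> | ->]; lra. }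
  assert (Hmono : forall a b, 0 < a -> a <= b -> Phi a <= Phi b).
  { intros a b Ha Hab. destruct (Req_dec a b) as [->|]. lra.
    destruct (MVT_gen Phi a b (fun x => / (c * (1 + s * f x)))) as [z [Hz Hz2]].
    - rewrite Rmin_left, Rmax_right by lra. intros y Hy. apply is_derive_Reals. apply Hd. lra.
    - rewrite Rmin_left, Rmax_right by lra. intros y Hy. eapply dcont'. apply Hd. lra.
    - rewrite Rmin_left, Rmax_right in Hz by lra. specialize (Hk z ltac:(lra)). nra. }
  assert (Hstep : forall n, Phi ((/2) ^ (m n)) - Phi ((/2) ^ (S (m n))) = / c).
  { intro n. pose proof (half_pow_pos (m n)) as P0.
    assert (E : (/2) ^ (S (m n)) = /2 * (/2) ^ (m n)) by reflexivity.
    destruct (MVT_gen Phi ((/2) ^ (S (m n))) ((/2) ^ (m n)) (fun x => / (c * (1 + s * f x)))) as [z [Hz Hz2]].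
    - rewrite Rmin_left, Rmax_right by lra. intros y Hy. apply is_derive_Reals. apply Hd. lra.
    - rewrite Rmin_left, Rmax_right by lra. intros y Hy. eapply dcont'. apply Hd. lra.
    - rewrite Rmin_left, Rmax_right in Hz by lra. rewrite Hz2. rewrite (Hint n z Hz).
      rewrite E. field. lra. }
  assert (Hind : forall n, Phi ((/2) ^ (m n)) <= Phi ((/2) ^ (m 0%nat)) - INR n / c).
  { induction n. simpl. lra.
    rewrite S_INR.
    assert (Phi ((/2) ^ (m (S n))) <= Phi ((/2) ^ (S (m n)))).
    { apply Hmono. apply half_pow_pos. apply half_pow_le. apply Hm. }
    specialize (Hstep n). unfold Rdiv in *. rewrite Rmult_plus_distr_r. lra. }
  destruct (INR_archimed (/ c) (Phi ((/2) ^ (m 0%nat)) - M)) as [n Hn].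
  { apply Rlt_gt. apply Rinv_0_lt_compat. auto. }
  exists ((/2) ^ (m n)). split. apply half_pow_pos.
  specialize (Hind n). unfold Rdiv in Hind. lra.
Qed.
End U.
Lemma cont_k (f : R -> R) s c x : continuity_pt f x -> c * (1 + s * f x) <> 0 ->
  continuity_pt (fun x => / (c * (1 + s * f x))) x.
Proof.
  intros Hf Hn.
  apply (continuity_pt_comp f (fun e => / (c * (1 + s * e))) x Hf).
  apply (dcont _ _ (- (c * s) / (c * (1 + s * f x)) ^ 2)).
  apply is_derive_Reals. auto_derive. intro E; apply Hn; exact E. field. split; intro E; apply Hn; rewrite E; ring.
Qed.

Lemma randers_all (f f' : R -> R)
  (Hd : forall x, 0 < x -> derivable_pt_lim f x (f' x))
  (Hb : forall x, 0 < x -> Rabs (f x) < 1)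
  (Hlo : forall s c Phi, (s = 1 \/ s = -1) -> 0 < c ->
     (forall x, 0 < x -> derivable_pt_lim Phi x (/ (c * (1 + s * f x)))) ->
     forall M, exists x, 0 < x /\ Phi x < M) :
  forall D g, inextendible_geodesic (randersL f) D g -> forall t, D t.
Proof.
  intros D g [[[[t0 Ht0] [Hconv Hopen]] [Hpos [dg [p [q Hg]]]]] Hnot] t.
  apply NNPP; intro Hnt.
  assert (Hne : forall x s, 0 < x -> (s = 1 \/ s = -1) -> f x + s <> 0).
  { intros x s Hx Hs. specialize (Hb x Hx). apply Rabs_def2 in Hb. destruct Hs as [->| ->]; lra. }
  assert (Hpd : forall tau, D tau -> 0 < p tau * dg tau).
  { intros tau Ht. destruct (Hg tau Ht) as [_ [Hdg0 [Hp _]]].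
    assert (Hs : exists s, (s = 1 \/ s = -1) /\ 0 < s * dg tau).
    { destruct (Rtotal_order (dg tau) 0) as [h|[h|h]]. exists (-1); split; [auto|lra].
      contradiction. exists 1; split; [auto|lra]. }
    destruct Hs as [s [Hs Hs2]].
    pose proof (PV f s (g tau) (dg tau) Hs Hs2 (Hne _ _ (Hpos tau Ht) Hs)) as HPV.
    rewrite (uniqueness_limite _ _ _ _ Hp HPV).
    assert (0 < (f (g tau) + s) ^ 2).
    { pose proof (Hne _ _ (Hpos tau Ht) Hs). simpl. rewrite Rmult_1_r.
      apply Rsqr_pos_lt in H. exact H. }
    replace (dg tau / (f (g tau) + s) ^ 2 * dg tau) with (dg tau * dg tau / (f (g tau) + s) ^ 2) by (field; apply Hne; auto).
    apply Rdiv_lt_0_compat; auto. assert (dg tau <> 0) by auto.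
    pose proof (Rsqr_pos_lt _ H0). unfold Rsqr in H1. auto. }
  assert (Hsx : exists s, (s = 1 \/ s = -1) /\ 0 < s * dg t0).
  { destruct (Hg t0 Ht0) as [_ [Hdg0 _]].
    destruct (Rtotal_order (dg t0) 0) as [h|[h|h]]. exists (-1); split; [auto|lra].
    contradiction. exists 1; split; [auto|lra]. }
  destruct Hsx as [s [Hs Hs0]].
  assert (Hsgn : forall tau, D tau -> 0 < s * dg tau).
  { intros tau Ht.
    assert (Hpp : 0 < p tau * p t0).
    { assert (K : forall a b, D a -> D b -> a <= b -> 0 < p a * p b).
      { intros a b Ha Hb' Hab. destruct (Req_dec a b) as [->|Hab2].
        - specialize (Hpd b Hb'). assert (p b <> 0) by (intro E; rewrite E in Hpd; lra).
          pose proof (Rsqr_pos_lt _ H). unfold Rsqr in H0. auto.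
        - apply no_sign_change. lra. intros z Hz. assert (Dz : D z) by (apply (Hconv a z b); auto).
          split. destruct (Hg z Dz) as [_ [_ [_ [_ Hq]]]]. apply (dcont _ _ _ Hq).
          specialize (Hpd z Dz). intro E; rewrite E in Hpd; lra. }
      destruct (Rle_dec tau t0). apply K; auto. rewrite Rmult_comm. apply K; auto. lra. }
    pose proof (Hpd t0 Ht0). specialize (Hpd tau Ht).
    destruct Hs as [-> | ->];
    destruct (Rtotal_order (p tau) 0) as [h1|[h1|h1]];
    destruct (Rtotal_order (p t0) 0) as [h2|[h2|h2]]; try nra. }
  assert (HPt : forall tau, D tau -> p tau = dg tau / (f (g tau) + s) ^ 2).
  { intros tau Ht. destruct (Hg tau Ht) as [_ [_ [Hp _]]].
    exact (uniqueness_limite _ _ _ _ Hp (PV f s (g tau) (dg tau) Hs (Hsgn tau Ht) (Hne _ _ (Hpos tau Ht) Hs))). }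
  assert (HQt : forall tau, D tau -> q tau = - (dg tau * dg tau) * f' (g tau) / (f (g tau) + s) ^ 3).
  { intros tau Ht. destruct (Hg tau Ht) as [_ [_ [_ [Hq _]]]].
    exact (uniqueness_limite _ _ _ _ Hq (PX f f' s (g tau) (dg tau) Hs (Hsgn tau Ht) (Hne _ _ (Hpos tau Ht) Hs) (Hd _ (Hpos tau Ht)))). }
  assert (Hu : forall tau, D tau -> derivable_pt_lim (fun t => p t * (f (g t) + s)) tau 0).
  { intros tau Ht. destruct (Hg tau Ht) as [Hgd [_ [_ [_ Hpq]]]].
    assert (H1 : derivable_pt_lim (fun t => f (g t) + s) tau (f' (g tau) * dg tau)).
    { pose proof (derivable_pt_lim_comp g f tau _ _ Hgd (Hd _ (Hpos tau Ht))) as C.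
      pose proof (derivable_pt_lim_plus _ (fun _ => s) tau _ _ C (derivable_pt_lim_const s tau)) as C2.
      rewrite Rplus_0_r in C2. exact C2. }
    pose proof (derivable_pt_lim_mult _ _ tau _ _ Hpq H1) as M.
    replace 0 with (q tau * (f (g tau) + s) + p tau * (f' (g tau) * dg tau)).
    exact M. rewrite HQt, HPt by auto. pose proof (Hne _ _ (Hpos tau Ht) Hs). field. auto. }
  set (c := p t0 * (f (g t0) + s)).
  assert (Hc : forall tau, D tau -> p tau * (f (g tau) + s) = c).
  { intros tau Ht. apply (zero_deriv_const D _ Hconv Hu); auto. }
  assert (Hdg : forall tau, D tau -> dg tau = c * (f (g tau) + s)).
  { intros tau Ht. rewrite <- (Hc tau Ht), (HPt tau Ht). pose proof (Hne _ _ (Hpos tau Ht) Hs). field. auto. }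
  assert (Hcpos : 0 < c).
  { pose proof (Hdg t0 Ht0) as E. pose proof (Hb _ (Hpos t0 Ht0)) as B. apply Rabs_def2 in B.
    rewrite E in Hs0. destruct Hs as [-> | ->]; nra. }
  assert (Hkpos : forall x, 0 < x -> 0 < / (c * (1 + s * f x))).
  { intros x Hx. apply Rinv_0_lt_compat. pose proof (Hb x Hx) as B. apply Rabs_def2 in B.
    apply Rmult_lt_0_compat; auto. destruct Hs as [-> | ->]; lra. }
  destruct (antideriv (fun x => / (c * (1 + s * f x)))) as [Phi HPhi].
  { intros x Hx. apply cont_k. apply (dcont _ _ _ (Hd x Hx)). specialize (Hkpos x Hx).
    intro E; rewrite E in Hkpos. rewrite Rinv_0 in Hkpos. lra. }
  destruct (inverse_fun Phi _ HPhi Hkpos (up_unb f Phi s c Hs Hcpos Hb HPhi)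
     (Hlo s c Phi Hs Hcpos HPhi)) as [Psi HPsi].
  assert (Hinc := pos_deriv_incr Phi _ HPhi Hkpos).
  assert (Hinj : forall a b, 0 < a -> 0 < b -> Phi a = Phi b -> a = b).
  { intros a b Ha Hb' E. destruct (Rtotal_order a b) as [h|[h|h]]; auto.
    - specialize (Hinc a b Ha h); lra.
    - specialize (Hinc b a Hb' h); lra. }
  set (A := Phi (g t0) - s * t0).
  assert (HA : forall tau, D tau -> Phi (g tau) = s * tau + A).
  { intros tau Ht.
    assert (Z : forall t, D t -> derivable_pt_lim (fun t => Phi (g t) - s * t) t 0).
    { intros t1 Ht1. destruct (Hg t1 Ht1) as [Hgd _].
      pose proof (derivable_pt_lim_comp g Phi t1 _ _ Hgd (HPhi _ (Hpos t1 Ht1))) as C.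
      pose proof (derivable_pt_lim_scal id s t1 1 (derivable_pt_lim_id t1)) as C1.
      pose proof (derivable_pt_lim_minus _ _ t1 _ _ C C1) as C2.
      replace 0 with (/ (c * (1 + s * f (g t1))) * dg t1 - s * 1). exact C2.
      rewrite (Hdg t1 Ht1). pose proof (Hb _ (Hpos t1 Ht1)) as B. apply Rabs_def2 in B.
      destruct Hs as [-> | ->]; field; split; lra. }
    pose proof (zero_deriv_const D _ Hconv Z tau t0 Ht Ht0). unfold A. lra. }
  set (h := fun tau => Psi (s * tau + A)).
  apply Hnot. exists (fun _ => True), h. split; [|split;[|split]].
  - split; [|split].
    + split. exists 0; auto. split. auto. intros; exists 1; split; auto; lra.
    + intros tau _. apply HPsi.
    + exists (fun tau => c * (f (h tau) + s)), (fun tau => c / (f (h tau) + s)),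
        (fun tau => - ((c * (f (h tau) + s)) * (c * (f (h tau) + s))) * f' (h tau) / (f (h tau) + s) ^ 3).
      intros tau _.
      assert (Hh : 0 < h tau) by apply HPsi.
      pose proof (Hne _ _ Hh Hs) as He.
      pose proof (Hb _ Hh) as B. apply Rabs_def2 in B.
      assert (Hsd : 0 < s * (c * (f (h tau) + s))) by (destruct Hs as [-> | ->]; nra).
      assert (Hhd : derivable_pt_lim h tau (c * (f (h tau) + s))).
      { pose proof (derivable_pt_lim_scal id s tau 1 (derivable_pt_lim_id tau)) as C1.
        pose proof (derivable_pt_lim_plus _ (fun _ => A) tau _ _ C1 (derivable_pt_lim_const A tau)) as C2.
        destruct (HPsi (s * tau + A)) as [_ [_ Hd3]].
        pose proof (derivable_pt_lim_comp _ Psi tau _ _ C2 Hd3) as C3.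
        replace (c * (f (h tau) + s)) with (/ (/ (c * (1 + s * f (Psi (s * tau + A))))) * (s * 1 + 0)).
        exact C3. unfold h in *. destruct Hs as [-> | ->]; field; repeat split; nra. }
      split; [exact Hhd|split;[|split;[|split]]].
      * intro E. apply Rmult_integral in E. destruct E; [lra|auto].
      * replace (c / (f (h tau) + s)) with ((c * (f (h tau) + s)) / (f (h tau) + s) ^ 2) by (field; auto).
        apply PV; auto.
      * apply PX; auto.
      * pose proof (derivable_pt_lim_comp h f tau _ _ Hhd (Hd _ Hh)) as C.
        assert (G : derivable_pt_lim (fun e => c / (e + s)) (f (h tau)) (- c / (f (h tau) + s) ^ 2)).
        { apply is_derive_Reals. auto_derive. auto. field. auto. }
        pose proof (derivable_pt_lim_comp _ _ tau _ _ C G) as C2.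
        replace (- ((c * (f (h tau) + s)) * (c * (f (h tau) + s))) * f' (h tau) / (f (h tau) + s) ^ 3)
          with (- c / (f (h tau) + s) ^ 2 * (f' (h tau) * (c * (f (h tau) + s)))) by (field; auto).
        exact C2.
  - intros; auto.
  - intros tau Ht. unfold h. destruct (HPsi (s * tau + A)) as [P1 [P2 _]].
    apply Hinj; auto. rewrite P2, HA; auto.
  - exists t. split; auto.
Qed.
Lemma riem_incomplete : ~ (forward_complete riemL /\ backward_complete riemL).
Proof.
  intros [_ Hbw].
  assert (H : inextendible_geodesic riemL (fun t => 0 < t) (fun t => t)).
  { split.
    - split; [|split].
      + split. exists 1; lra. split. intros; lra.
        intros t Ht. exists t. split; auto. intros s Hs. apply Rabs_def2 in Hs. lra.
      + auto.
      + exists (fun _ => 1), (fun _ => 1), (fun _ => 0). intros t Ht.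
        split; [apply derivable_pt_lim_id|split;[lra|split;[|split]]].
        * unfold riemL. apply is_derive_Reals. auto_derive; auto. field.
        * unfold riemL. apply is_derive_Reals. auto_derive; auto.
        * apply derivable_pt_lim_const.
    - intros [D' [h [[[_ [Hc _]] [Hp [dh [p [q Hh]]]]] [Hsub [Heq [t1 [Ht1 Hnt1]]]]]]].
      assert (D0 : D' 0) by (apply (Hc t1 0 1); auto; [apply Hsub; lra | lra]).
      pose proof (Hp 0 D0) as Hp0.
      destruct (Hh 0 D0) as [Hd _].
      pose proof (dcont _ _ _ Hd) as Hcont.
      unfold continuity_pt, continue_in, limit1_in, limit_in in Hcont. simpl in Hcont.
      destruct (Hcont (h 0 / 2) ltac:(lra)) as [alp [Halp Hx]].
      set (x := Rmin (alp / 2) (h 0 / 2)).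
      assert (Hx0 : 0 < x) by (apply Rmin_glb_lt; lra).
      assert (Hx1 : x <= alp / 2) by apply Rmin_l.
      assert (Hx2 : x <= h 0 / 2) by apply Rmin_r.
      specialize (Hx x). unfold R_dist, D_x, no_cond in Hx.
      rewrite Heq in Hx by auto.
      assert (Rabs (x - h 0) < h 0 / 2).
      { apply Hx. split. split; auto; lra. rewrite Rminus_0_r, Rabs_right; lra. }
      apply Rabs_def2 in H. lra. }
  destruct (Hbw _ _ H 0) as [t [Ht Ht2]]. lra.
Qed.

Theorem mainTheorem5 (f : R -> R)
  (Hsmooth : smooth_on_pos f)
  (Hbound : forall x, 0 < x -> Rabs (f x) < 1)
  (H4k : forall (k : nat) (x : R),
      (/2) ^ (4 * k + 1) <= x <= (/2) ^ (4 * k) ->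
      f x = (/2) ^ (4 * k + 1) - 1)
  (H4k2 : forall (k : nat) (x : R),
      (/2) ^ (4 * k + 3) <= x <= (/2) ^ (4 * k + 2) ->
      f x = 1 - (/2) ^ (4 * k + 3)) :
  forward_complete (randersL f) /\ backward_complete (randersL f) /\
  ~ (forward_complete riemL /\ backward_complete riemL).
Proof.
  destruct Hsmooth as [F [HF0 HF]].
  assert (Hd : forall x, 0 < x -> derivable_pt_lim f x (F 1%nat x)).
  { intros x Hx. rewrite <- HF0. apply HF. auto. }
  assert (Hlo : forall s c Phi, (s = 1 \/ s = -1) -> 0 < c ->
     (forall x, 0 < x -> derivable_pt_lim Phi x (/ (c * (1 + s * f x)))) ->
     forall M, exists x, 0 < x /\ Phi x < M).
  { intros s c Phi Hs Hc HPhi. destruct Hs as [Hs|Hs].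
    - apply (lo_unb f Phi s c (fun n => 4 * n)%nat); auto.
      + intros n y Hy. replace (S (4 * n)) with (4 * n + 1)%nat in * by lia.
        rewrite (H4k n y Hy). subst. ring.
      + intros; lia.
    - apply (lo_unb f Phi s c (fun n => 4 * n + 2)%nat); auto.
      + intros n y Hy. replace (S (4 * n + 2)) with (4 * n + 3)%nat in * by lia.
        rewrite (H4k2 n y Hy). subst. ring.
      + intros; lia. }
  pose proof (randers_all f (F 1%nat) Hd Hbound Hlo) as RA.
  split; [|split].
  - intros D g H M. exists (M + 1). split; [apply (RA D g H) | lra].
  - intros D g H M. exists (M - 1). split; [apply (RA D g H) | lra].
  - apply riem_incomplete.
Qed.
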